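(* Let $G$ be a connected graph with at least $5$ vertices and let $H$ be a connected component of the complement $\overline{G}$ such that $H$ is isomorphic to the path $P_4$ on $4$ vertices. Then no vertex of $H$ is a basis forced vertex of $G$.
   Context: All graphs are finite and simple. $\overline{G}$ denotes the complement graph. For vertices $u,v$ of a connected graph $G$, $d(u,v)$ is the length of a shortest $u$–$v$ path. A set $R\subseteq V(G)$ is a resolving set if for all distinct $x,y\in V(G)$ there is $r\in R$ with $d(r,x)\neq d(r,y)$. The metric dimension $\dim(G)$ is the minimum cardinality of a resolving set, and a resolving set of cardinality $\dim(G)$ is a metric basis. A vertex is a basis forced vertex if it belongs to every metric basis of $G$. *)

(* Defs.v *)
From mathcomp Require Import all_boot.
Set Implicit Arguments. Unset Strict Implicit. Unset Printing Implicit Defensive.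

Section Graphs.
Variable T : finType.

Definition simple_graph (e : rel T) : Prop := symmetric e /\ irreflexive e.

Definition connected_graph (e : rel T) : Prop := forall x y, connect e x y.

Definition compl_graph (e : rel T) : rel T := fun x y => (x != y) && ~~ e x y.

Fixpoint ball (e : rel T) (x : T) (n : nat) : {set T} :=
  match n with
  | 0 => [set x]
  | n'.+1 => ball e x n' :|: [set y | [exists z in ball e x n', e z y]]
  end.

(* shortest-path distance: least n with y in ball e x n
   (meaningful for connected graphs, where it is < #|T|) *)
Definition dist (e : rel T) (x y : T) : nat :=
  find (fun n => y \in ball e x n) (iota 0 #|T|).

Definition resolving (e : rel T) (R : {set T}) : Prop :=
  forall x y, x != y -> exists2 r, r \in R & dist e r x != dist e r y.

Definition metric_basis (e : rel T) (R : {set T}) : Prop :=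
  resolving e R /\ forall R', resolving e R' -> #|R| <= #|R'|.

Definition basis_forced (e : rel T) (v : T) : Prop :=
  forall R, metric_basis e R -> v \in R.

Definition component (f : rel T) (C : {set T}) : Prop :=
  exists v, C = [set u | connect f v u].

Definition induced_P4 (f : rel T) (C : {set T}) : Prop :=
  exists g : 'I_4 -> T, [/\ injective g, C = g @: setT &
    forall i j : 'I_4, f (g i) (g j) = ((i.+1 == j) || (j.+1 == i))].
End Graphs.

(* Main.v *)
Require Import Defs.
From mathcomp Require Import all_boot.
Set Implicit Arguments. Unset Strict Implicit. Unset Printing Implicit Defensive.

Section Aux.
Variable T : finType.
Implicit Types (e : rel T) (x y z : T).

Lemma dist0 e x : dist e x x = 0.
Proof.
rewrite /dist; have : 0 < #|T| by apply/card_gt0P; exists x.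
by case: #|T| => [|n] //= _; rewrite inE eqxx.
Qed.

Lemma dist_neq0 e x y : x != y -> dist e x y != 0.
Proof.
move=> hxy; rewrite /dist; have : 0 < #|T| by apply/card_gt0P; exists x.
by case: #|T| => [|n] //= _; rewrite inE (eq_sym y x) (negbTE hxy).
Qed.

Lemma ball1 e x y : (y \in ball e x 1) = (y == x) || e x y.
Proof.
rewrite /= !inE; congr (_ || _); apply/existsP/idP => [[z /andP [] ]|h].
  by rewrite inE => /eqP ->.
by exists x; rewrite inE eqxx.
Qed.

Lemma dist1 e x y : 2 < #|T| -> x != y -> e x y -> dist e x y = 1.
Proof.
move=> hT hxy exy; rewrite /dist; case: #|T| hT => [|[|[|n]]] //= _.
by rewrite inE eq_sym (negbTE hxy) -/(ball e x 1) ball1 exy orbT.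
Qed.

Lemma dist2 e x y z : 2 < #|T| -> x != y -> ~~ e x y -> e x z -> e z y ->
  dist e x y = 2.
Proof.
move=> hT hxy nexy exz ezy; rewrite /dist; case: #|T| hT => [|[|[|n]]] //= _.
rewrite inE eq_sym (negbTE hxy) -/(ball e x 1) ball1 eq_sym (negbTE hxy) (negbTE nexy).
rewrite /= inE; have -> : y \in [set y0 | [exists z0 in ball e x 1, e z0 y0]].
  by rewrite inE; apply/existsP; exists z; rewrite ball1 exz orbT ezy.
by rewrite orbT.
Qed.

Definition resb e (R : {set T}) :=
  [forall x, forall y, (x != y) ==> [exists r in R, dist e r x != dist e r y]].

Lemma resP e R : reflect (resolving e R) (resb e R).
Proof.
apply: (iffP idP) => [H x y Hxy | H].
  move/forallP: H => /(_ x) /forallP /(_ y) /implyP /(_ Hxy) /existsP [r /andP [Hr Hd]].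
  by exists r.
apply/forallP => x; apply/forallP => y; apply/implyP => Hxy.
have [r Hr Hd] := H x y Hxy; apply/existsP; exists r; by rewrite Hr.
Qed.

Lemma basis_exists e : exists R, metric_basis e R.
Proof.
have HT : resb e setT.
  apply/resP => x y hxy; exists x; first by rewrite inE.
  by rewrite dist0 eq_sym dist_neq0.
have [R HR Hmin] := @arg_minnP _ setT (resb e) (fun R => #|R|) HT.
exists R; split; first exact/resP.
by move=> R' /resP; apply: Hmin.
Qed.

End Aux.

Section Key.
Variable T : finType.

Lemma swap_basis (e : rel T) (C R S : {set T}) :
  metric_basis e R ->
  (forall r x, r \in C -> x \notin C -> dist e r x = 1) ->
  (forall r x, r \notin C -> x \in C -> dist e r x = 1) ->
  2 <= #|R :&: C| -> #|S| <= 2 ->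
  (forall x y, x \in C -> y \in C -> x != y -> exists2 r, r \in S & dist e r x != dist e r y) ->
  (forall x, x \in C -> exists2 r, r \in S & dist e r x != 1) ->
  S \subset C ->
  metric_basis e ((R :\: C) :|: S).
Proof.
move=> [HR Hmin] DCW DWC HRC HS PS1 PS2 SC.
have Hres : resolving e ((R :\: C) :|: S).
  move=> x y hxy.
  case: (boolP (x \in C)) => xC; case: (boolP (y \in C)) => yC.
  - by have [r rS hr] := PS1 x y xC yC hxy; exists r; rewrite // inE rS orbT.
  - have [r rS hr] := PS2 x xC; exists r; first by rewrite inE rS orbT.
    by rewrite (DCW r y (subsetP SC r rS) yC).
  - have [r rS hr] := PS2 y yC; exists r; first by rewrite inE rS orbT.
    by rewrite (DCW r x (subsetP SC r rS) xC) eq_sym.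
  - have [r rR hr] := HR x y hxy; exists r => //.
    case: (boolP (r \in C)) => rC; first by rewrite !DCW in hr.
    by rewrite !inE rC rR.
split => // R' /Hmin; apply: leq_trans.
apply: (leq_trans (leq_card_setU _ _)).
rewrite -(cardsID C R) addnC leq_add2r.
exact: leq_trans HS HRC.
Qed.

Lemma key (e : rel T) (C : {set T}) (a b c d w0 : T) :
  simple_graph e -> 2 < #|T| ->
  (forall x, (x \in C) = [|| x == a, x == b, x == c | x == d]) ->
  a != b -> a != c -> a != d -> b != c -> b != d -> c != d ->
  e a c -> e a d -> e b d -> ~~ e a b -> ~~ e b c -> ~~ e c d ->
  (forall x w, x \in C -> w \notin C -> e x w) ->
  w0 \notin C ->
  forall v, v \in C -> ~ basis_forced e v.
Proof.
move=> [esym eirr] hT memC hab hac had hbc hbd hcd eac ead ebd nab nbc ncd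
  eCW w0C v vC Hforced.
have eCW' x w : x \in C -> w \notin C -> e w x by move=> *; rewrite esym eCW.
have DCW r x : r \in C -> x \notin C -> dist e r x = 1.
  move=> rC xC; apply: dist1 => //; last exact: eCW.
  by apply: contraNneq xC => <-.
have DWC r x : r \notin C -> x \in C -> dist e r x = 1.
  move=> rC xC; apply: dist1 => //; last exact: eCW'.
  by apply: contraNneq rC => ->.
have aC : a \in C by rewrite memC eqxx.
have bC : b \in C by rewrite memC eqxx orbT.
have cC : c \in C by rewrite memC eqxx !orbT.
have dC : d \in C by rewrite memC eqxx !orbT.
have ew x y : x \in C -> y \in C -> x != y -> ~~ e x y -> dist e x y = 2.
  move=> xC yC hxy nxy; apply: (@dist2 T e x y w0) => //; [exact: eCW|exact: eCW'].
have Daa := dist0 e a; have Dbb := dist0 e b; have Dcc := dist0 e c; have Ddd := dist0 e d.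
have Dac : dist e a c = 1 by apply: dist1.
have Dad : dist e a d = 1 by apply: dist1.
have Dbd : dist e b d = 1 by apply: dist1.
have Dca : dist e c a = 1 by apply: dist1; rewrite 1?eq_sym // esym.
have Dda : dist e d a = 1 by apply: dist1; rewrite 1?eq_sym // esym.
have Ddb : dist e d b = 1 by apply: dist1; rewrite 1?eq_sym // esym.
have Dab : dist e a b = 2 by apply: ew.
have Dbc : dist e b c = 2 by apply: ew.
have Dcd : dist e c d = 2 by apply: ew.
have Dba : dist e b a = 2 by apply: ew; rewrite 1?eq_sym // esym.
have Dcb : dist e c b = 2 by apply: ew; rewrite 1?eq_sym // esym.
have Ddc : dist e d c = 2 by apply: ew; rewrite 1?eq_sym // esym.
have [R HR] := basis_exists e.
have HRC : 2 <= #|R :&: C|.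
  have resC x y r : x \in C -> y \in C -> dist e r x != dist e r y -> r \in C.
    move=> xC yC; apply: contraTT => rC; by rewrite !DWC.
  have [r1 r1R h1] := HR.1 a b hab.
  have r1C := resC _ _ _ aC bC h1.
  have [x [y [xC yC hxy hr1]]] : exists x y, [/\ x \in C, y \in C, x != y &
       dist e r1 x = dist e r1 y].
    move: (r1C); rewrite memC => /or4P [] /eqP ->.
    - by exists c, d; rewrite Dac Dad.
    - by exists a, c; rewrite Dba Dbc.
    - by exists b, d; rewrite Dcb Dcd.
    - by exists a, b; rewrite Dda Ddb.
  have [r2 r2R h2] := HR.1 x y hxy.
  have r2C := resC _ _ _ xC yC h2.
  have r12 : r1 != r2 by apply: contraNneq h2 => <-; rewrite hr1.
  apply: (@leq_trans #|[set r1; r2]|); first by rewrite cards2 r12.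
  apply: subset_leq_card; apply/subsetP => z; rewrite !inE.
  by case/orP => /eqP ->; rewrite ?r1R ?r2R ?r1C ?r2C.
have fin (S : {set T}) : S \subset C -> #|S| <= 2 -> v \notin S ->
  (forall x y, x \in C -> y \in C -> x != y -> exists2 r, r \in S & dist e r x != dist e r y) ->
  (forall x, x \in C -> exists2 r, r \in S & dist e r x != 1) -> False.
  move=> SC HS vS PS1 PS2.
  have := Hforced _ (swap_basis HR DCW DWC HRC HS PS1 PS2 SC).
  by rewrite !inE vC (negbTE vS).
move: (vC); rewrite memC => /or4P [] /eqP vE; subst v;
  [apply: (fin [set b; c]) | apply: (fin [set a; d]) | apply: (fin [set a; d]) | apply: (fin [set b; c])].
all: try by rewrite cards2; case: (_ != _).
all: try by apply/subsetP => z; rewrite !inE => /orP [] /eqP ->.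
all: try by rewrite !inE negb_or ?hab ?hac ?had ?(eq_sym b a) ?(eq_sym c a) ?(eq_sym d a) ?hbd ?hcd ?hbc ?(eq_sym c b) ?(eq_sym d b) ?(eq_sym d c) ?hab.
all: try (move=> x; rewrite memC => /or4P [] /eqP ->;
  first [ by exists a; rewrite ?inE ?eqxx ?orbT ?Daa ?Dab ?Dac ?Dad ?Dba ?Dbb ?Dbc ?Dbd ?Dca ?Dcb ?Dcc ?Dcd ?Dda ?Ddb ?Ddc ?Ddd
        | by exists b; rewrite ?inE ?eqxx ?orbT ?Daa ?Dab ?Dac ?Dad ?Dba ?Dbb ?Dbc ?Dbd ?Dca ?Dcb ?Dcc ?Dcd ?Dda ?Ddb ?Ddc ?Ddd
        | by exists c; rewrite ?inE ?eqxx ?orbT ?Daa ?Dab ?Dac ?Dad ?Dba ?Dbb ?Dbc ?Dbd ?Dca ?Dcb ?Dcc ?Dcd ?Dda ?Ddb ?Ddc ?Ddd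
        | by exists d; rewrite ?inE ?eqxx ?orbT ?Daa ?Dab ?Dac ?Dad ?Dba ?Dbb ?Dbc ?Dbd ?Dca ?Dcb ?Dcc ?Dcd ?Dda ?Ddb ?Ddc ?Ddd ]).
all: try (by rewrite !inE; apply/norP; split; apply/eqP => E;
  move: hab hac had hbc hbd hcd; rewrite E !eqxx).
all: move=> x y; rewrite !memC => /or4P [] /eqP -> /or4P [] /eqP ->; rewrite ?eqxx // => _;
  first [ by exists a; rewrite ?inE ?eqxx ?orbT ?Daa ?Dab ?Dac ?Dad ?Dba ?Dbb ?Dbc ?Dbd ?Dca ?Dcb ?Dcc ?Dcd ?Dda ?Ddb ?Ddc ?Ddd
        | by exists b; rewrite ?inE ?eqxx ?orbT ?Daa ?Dab ?Dac ?Dad ?Dba ?Dbb ?Dbc ?Dbd ?Dca ?Dcb ?Dcc ?Dcd ?Dda ?Ddb ?Ddc ?Ddd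
        | by exists c; rewrite ?inE ?eqxx ?orbT ?Daa ?Dab ?Dac ?Dad ?Dba ?Dbb ?Dbc ?Dbd ?Dca ?Dcb ?Dcc ?Dcd ?Dda ?Ddb ?Ddc ?Ddd
        | by exists d; rewrite ?inE ?eqxx ?orbT ?Daa ?Dab ?Dac ?Dad ?Dba ?Dbb ?Dbc ?Dbd ?Dca ?Dcb ?Dcc ?Dcd ?Dda ?Ddb ?Ddc ?Ddd ].
Qed.
End Key.

Theorem lemma7 (T : finType) (e : rel T) (C : {set T}) :
  simple_graph e -> connected_graph e -> 5 <= #|T| ->
  component (compl_graph e) C -> induced_P4 (compl_graph e) C ->
  forall v, v \in C -> ~ basis_forced e v.
Proof.
move=> Hs Hc H5 [v0 HC] [g [ginj HCg Hadj]].
pose a := g (inord 0); pose b := g (inord 1); pose c := g (inord 2); pose d := g (inord 3).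
have memC x : (x \in C) = [|| x == a, x == b, x == c | x == d].
  rewrite HCg; apply/imsetP/idP => [[i _ ->]|].
    by rewrite -(inord_val i); case: i => [[|[|[|[|i]]]] Hi] //=; rewrite eqxx ?orbT.
  by case/or4P => /eqP ->; [exists (inord 0) | exists (inord 1) | exists (inord 2) | exists (inord 3)].
have neq i j : i < 4 -> j < 4 -> i != j -> g (inord i) != g (inord j).
  move=> hi hj hij; apply/eqP => /ginj /(congr1 (@nat_of_ord 4)) /eqP.
  by rewrite !inordK // (negbTE hij).
have hab : a != b by apply: neq.
have hac : a != c by apply: neq.
have had : a != d by apply: neq.
have hbc : b != c by apply: neq.
have hbd : b != d by apply: neq.
have hcd : c != d by apply: neq.
have adj i j : i < 4 -> j < 4 ->
    compl_graph e (g (inord i)) (g (inord j)) = (i.+1 == j) || (j.+1 == i).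
  by move=> hi hj; rewrite Hadj !inordK.
have eac : e a c by have := adj 0 2 isT isT; rewrite /compl_graph -/a -/c hac /= => /negbFE.
have ead : e a d by have := adj 0 3 isT isT; rewrite /compl_graph -/a -/d had /= => /negbFE.
have ebd : e b d by have := adj 1 3 isT isT; rewrite /compl_graph -/b -/d hbd /= => /negbFE.
have nab : ~~ e a b by have := adj 0 1 isT isT; rewrite /compl_graph -/a -/b => /andP [].
have nbc : ~~ e b c by have := adj 1 2 isT isT; rewrite /compl_graph -/b -/c => /andP [].
have ncd : ~~ e c d by have := adj 2 3 isT isT; rewrite /compl_graph -/c -/d => /andP [].
have eCW x w : x \in C -> w \notin C -> e x w.
  move=> xC wC; case: (boolP (e x w)) => // nxw; exfalso; move/negP: (wC); apply.
  have xw : x != w by apply: contraNneq wC => <-.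
  move: xC; rewrite HC !inE => cx; apply: connect_trans cx (connect1 _).
  by rewrite /compl_graph xw.
have [w0 w0C] : exists w0, w0 \notin C.
  case: (pickP (fun w => w \notin C)) => [w0 w0C | none]; first by exists w0.
  have sub : [set: T] \subset C by apply/subsetP => x _; move: (none x) => /negbFE.
  move: (subset_leq_card sub); rewrite cardsT HCg card_imset // cardsT card_ord => h4.
  by move: (leq_trans H5 h4).
apply: (key Hs _ memC hab hac had hbc hbd hcd eac ead ebd nab nbc ncd eCW w0C).
exact: leq_trans H5.
Qed.
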